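(* Let $(X_n)_{n\ge 0}$ be a discrete-time Markov chain with state space $\mathbb{R}^d$ whose transition probabilities have densities with respect to Lebesgue measure: $p_n(x,y)=p_{n,n+1}(x,y)$ denotes the one-step transition density from time $n$ to time $n+1$, and $p_{n,m}(x,y)$, $m\ge n$, denotes the $(m-n)$-step transition density (with $p_{n,n}(x,\cdot)$ interpreted as the Dirac distribution $\delta_x$). Fix $N\in\mathbb{N}$ and, for $0\le m<N$, functions $\psi_m:\mathbb{R}^d\times\mathbb{R}^d\to\mathbb{R}_+$ such that for each $m$ and each $y$ the function $$q_m(y,\cdot):=\frac{p_{N-m-1}(\cdot,y)}{\psi_m(y,\cdot)}$$ is a probability density on $\mathbb{R}^d$. For $y\in\mathbb{R}^d$ let $(Y^y_m,\mathcal{Y}^y_m)_{0\le m\le N}$ be the process defined by $Y^y_0=y$, $\mathcal{Y}^y_0=1$, $$\mathbb{P}(Y^y_{m+1}\in dz'\mid Y^y_m=z)=q_m(z,z')\,dz',\qquad \mathcal{Y}^y_{m+1}=\mathcal{Y}^y_m\,\psi_m(Y^y_m,Y^y_{m+1}),\quad 0\le m<N.$$ Then for every $n$ with $0\le n\le N$ and every test function $g:\mathbb{R}^d\to\mathbb{R}$ (for which the expressions are well defined), $$\int g(x)\,p_{n,N}(x,y)\,dx=\mathbb{E}\left[g(Y^y_{N-n})\,\mathcal{Y}^y_{N-n}\right].$$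
   Context: For $n=N$ the left-hand side is understood with $p_{N,N}(x,y)$ the Dirac distribution at $y$, i.e. it equals $g(y)$. *)

(* Defs.v *)
From mathcomp Require Import all_boot all_algebra.
From mathcomp Require Import all_classical all_reals all_analysis.
Import GRing.Theory Num.Theory.

Set Implicit Arguments.
Unset Strict Implicit.
Unset Printing Implicit Defensive.

Local Open Scope classical_set_scope.
Local Open Scope ring_scope.
Local Open Scope ereal_scope.

Section markov_defs.
Context {dsp : measure_display} {T : measurableType dsp} {R : realType}.
Variable mu : {measure set T -> \bar R}.

(* [pstep p n k x y] is the (k+1)-step transition density p_{n,n+k+1}(x,y),
   built from the one-step densities p_j = p_{j,j+1} by Chapman-Kolmogorov:
   p_{n,m+1}(x,y) = \int p_{n,m}(x,z) p_m(z,y) dz. *)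
Fixpoint pstep (p : nat -> T -> T -> R) (n k : nat) : T -> T -> \bar R :=
  match k with
  | 0 => fun x y => (p n x y)%:E
  | k'.+1 => fun x y =>
      \int[mu]_z (pstep p n k' x z * (p (n + k')%N.+1 z y)%:E)
  end.

Definition ptrans (p : nat -> T -> T -> R) (n m : nat) : T -> T -> \bar R :=
  pstep p n (m - n).-1.

(* Left-hand side: \int g(x) p_{n,N}(x,y) dx, which is g(y) when n = N
   (p_{N,N}(x,.) is the Dirac mass at x). *)
Definition transition_integral (p : nat -> T -> T -> R) (g : T -> R)
    (n N : nat) (y : T) : \bar R :=
  if n == N then (g y)%:E
  else \int[mu]_x ((g x)%:E * ptrans p n N x y).

(* q_m(y,x) = p_{N-m-1}(x,y) / psi_m(y,x), computed in the extended reals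
   (so c/0 = +oo for c > 0 and 0/0 = 0). *)
Definition qdens (p : nat -> T -> T -> R) (psi : nat -> T -> T -> R)
    (N m : nat) (y x : T) : \bar R :=
  (p (N - m.+1)%N x y)%:E / (psi m y x)%:E.

(* [wexp q psi g k m z] = E[ g(Y_{m+k}) * prod_{m<=j<m+k} psi_j(Y_j,Y_{j+1})
                            | Y_m = z ]
   for the Markov chain Y whose transition density from time j to j+1 is
   q j, i.e. the iterated integral against the law of the chain. *)
Fixpoint wexp (q : nat -> T -> T -> \bar R) (psi : nat -> T -> T -> R)
    (g : T -> R) (k m : nat) (z : T) : \bar R :=
  match k with
  | 0 => (g z)%:E
  | k'.+1 => \int[mu]_z' (q m z z' * (psi m z z')%:E * wexp q psi g k' m.+1 z')
  end.

Definition weighted_expectation (p psi : nat -> T -> T -> R) (g : T -> R)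
    (N k : nat) (y : T) : \bar R :=
  wexp (qdens p psi N) psi g k 0 y.

End markov_defs.

(* Lebesgue measure on R^d (here d.-tuple R with the product (Borel)
   sigma-algebra) is characterised as the measure giving every box
   ]a,b] its volume. *)
Definition is_lebesgue_Rd {R : realType} (d : nat)
    (mu : {measure set (d.-tuple R) -> \bar R}) : Prop :=
  forall a b : d.-tuple R, (forall i, (tnth a i <= tnth b i)%R) ->
    mu [set x | forall i, (tnth a i < tnth x i <= tnth b i)%R] =
    (\prod_(i < d) (tnth b i - tnth a i))%:E.

(* Main.v *)
Require Import Defs.
From HB Require Import structures.
From mathcomp Require Import all_boot all_order all_algebra.
From mathcomp Require Import all_classical all_reals all_analysis.
From mathcomp Require Import measurable_realfun zify.
Import GRing.Theory Num.Theory.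
Import Order.TTheory.
Local Open Scope classical_set_scope.
Local Open Scope ring_scope.
Local Open Scope ereal_scope.

Lemma box_meas {R : realType} {d : nat} (a b : d.-tuple R) :
  measurable [set x : d.-tuple R | forall i, (tnth a i < tnth x i <= tnth b i)%R].
Proof.
rewrite (_ : [set x | _] = \bigcap_(i in [set: 'I_d])
    ((@tnth _ R ^~ i) @^-1` `]tnth a i, tnth b i]%classic)).
  apply: fin_bigcap_measurable => // i _.
  rewrite -[X in measurable X]setTI.
  exact: (@measurable_tnth _ _ _ i measurableT _ (measurable_itv _)).
apply/seteqP; split => x /= H.
  by move=> i _; rewrite /= in_itv /=; exact: H i.
by move=> i; have := H i I; rewrite /= in_itv.
Qed.

Lemma leb_sigma_finite {R : realType} (d : nat)
    (mu : {measure set (d.-tuple R) -> \bar R}) :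
  is_lebesgue_Rd mu -> sigma_finite setT mu.
Proof.
move=> mu_leb.
pose a (k : nat) : d.-tuple R := [tuple (- (k%:R : R))%R | i < d].
pose b (k : nat) : d.-tuple R := [tuple (k%:R : R) | i < d].
exists (fun k => [set x : d.-tuple R | forall i, (tnth (a k) i < tnth x i <= tnth (b k) i)%R]).
  apply/seteqP; split => // x _.
  exists (Num.Def.truncn (\sum_i `|tnth x i|)%R).+1 => // i.
  rewrite !tnth_mktuple.
  have h1 : (`|tnth x i| <= \sum_i `|tnth x i|)%R.
    by rewrite (bigD1 i) //= lerDl sumr_ge0.
  have h2 := truncnS_gt (\sum_i `|tnth x i|)%R.
  have h3 := le_lt_trans h1 h2.
  move: h3; rewrite ltr_norml => /andP[h4 h5].
  by rewrite h4 ltW.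
move=> k; split; first exact: box_meas.
rewrite mu_leb ?ltry // => i; rewrite !tnth_mktuple.
by apply: (@le_trans _ _ 0%R); rewrite ?oppr_le0 ler0n.
Qed.

Lemma ge0_le_integral_nm {d} {T : measurableType d} {R : realType}
  (mu : {measure set T -> \bar R}) (f1 f2 : T -> \bar R) :
  (forall x, 0 <= f1 x) -> (forall x, f1 x <= f2 x) ->
  \int[mu]_x f1 x <= \int[mu]_x f2 x.
Proof.
move=> f10 f12; have f20 x : 0 <= f2 x by exact: le_trans (f10 x) (f12 x).
rewrite !ge0_integralE//.
apply: ereal_sup_le => _ /= [h hf1 <-]; exists h => //= x.
apply: le_trans (hf1 x) _; rewrite !patchE; case: ifP => // _.
Qed.

Section gen.
Context {dsp : measure_display} {T : measurableType dsp} {R : realType}.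
Variable mu : {sigma_finite_measure set T -> \bar R}.
Variables (p psi : nat -> T -> T -> R) (N : nat).
Hypothesis p_ge0 : forall j x y, (0 <= p j x y)%R.
Hypothesis p_meas : forall j, measurable_fun setT (fun xy : T * T => p j xy.1 xy.2).
Hypothesis psi_ge0 : forall m y x, (m < N)%N -> (0 <= psi m y x)%R.
Hypothesis psi_meas : forall m, (m < N)%N -> measurable_fun setT (fun yx : T * T => psi m yx.1 yx.2).
Hypothesis q_prob : forall m y, (m < N)%N -> \int[mu]_x qdens p psi N m y x = 1.

Definition kk m z z' : R := if psi m z z' == 0%R then 0%R else p (N - m.+1) z' z.

Fixpoint W (g : T -> R) (j m : nat) (z : T) : \bar R :=
  match j with
  | 0 => (g z)%:E
  | j'.+1 => \int[mu]_z' ((kk m z z')%:E * W g j' m.+1 z')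
  end.

Lemma kk_ge0 m z z' : (0 <= kk m z z')%R.
Proof. by rewrite /kk; case: ifP. Qed.

Lemma kk_meas m : (m < N)%N -> measurable_fun setT (fun zz : T * T => kk m zz.1 zz.2).
Proof.
move=> mN; apply: measurable_fun_ifT.
- by apply: measurable_fun_eqr => //; exact: psi_meas.
- exact: measurable_cst.
- exact: (measurableT_comp (p_meas (N - m.+1)) (@measurable_swap _ _ T T)).
Qed.

Lemma qk m z z' : (m < N)%N ->
  qdens p psi N m z z' * (psi m z z')%:E = (kk m z z')%:E.
Proof.
move=> mN; rewrite /qdens /kk; case: eqP => [->|h]; first by rewrite mule0.
by rewrite inver ifN; [rewrite -!EFinM mulfVK//; exact/eqP|exact/eqP].
Qed.

Lemma wexp_W g j m z : (m + j <= N)%N ->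
  wexp mu (qdens p psi N) psi g j m z = W g j m z.
Proof.
elim: j m z => //= j IH m z h; apply: eq_integral => z' _.
by rewrite qk ?IH //; lia.
Qed.

Lemma W_ge0 g : (forall x, 0 <= g x)%R -> forall j m z, 0 <= W g j m z.
Proof.
move=> g0; elim=> /= [|j IH] m z; first by rewrite lee_fin.
apply: integral_ge0 => z' _; apply: mule_ge0 => //; by rewrite lee_fin kk_ge0.
Qed.

Lemma W_meas g : measurable_fun setT g ->
  forall j m, (m + j <= N)%N -> measurable_fun setT (W g j m).
Proof.
move=> mg; elim=> /= [|j IH] m h; first exact/measurable_EFinP.
pose F := fun zz : T * T => (kk m zz.1 zz.2)%:E * W g j m.+1 zz.2.
have mF : measurable_fun setT F.
  apply: emeasurable_funM.
    apply/measurable_EFinP; apply: kk_meas; lia.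
  have mW := IH m.+1 ltac:(lia).
  exact: (measurableT_comp mW measurable_snd).
rewrite (_ : (fun z => _) = fun z => fubini_F mu (F^\+) z - fubini_F mu (F^\-) z).
  apply: emeasurable_funB.
  - by apply: measurable_fun_fubini_tonelli_F => //; exact: measurable_funepos.
  - by apply: measurable_fun_fubini_tonelli_F => //; exact: measurable_funeneg.
apply/funext => z; rewrite /fubini_F [LHS]integralE.
by congr (_ - _); apply: eq_integral => y _; rewrite ?funeposE ?funenegE.
Qed.

Lemma kk_ae m y (F : T -> \bar R) : (m < N)%N -> measurable_fun setT F ->
  (forall z, 0 <= F z) ->
  \int[mu]_z ((kk m y z)%:E * F z) = \int[mu]_z ((p (N - m.+1) z y)%:E * F z).
Proof.
move=> mN mF F0.
pose b := fun z => (psi m y z == 0%R) && (p (N - m.+1) z y != 0%R).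
have mpy : measurable_fun setT (fun z => p (N - m.+1) z y).
  exact: (measurableT_comp (p_meas (N - m.+1)) (pair2_measurable y)).
have mps : measurable_fun setT (fun z => psi m y z).
  have := measurableT_comp (psi_meas m mN) (@pair1_measurable _ _ T T y).
  move=> H; exact: H.
have mb : measurable_fun setT b.
  apply: measurable_and; first exact: measurable_fun_eqr.
  by apply: measurable_neg; exact: measurable_fun_eqr.
pose S := b @^-1` [set true].
have mS : measurable S by rewrite -[S]setTI; exact: mb.
have S0 : mu S = 0.
  apply/eqP; apply/negPn/negP => muS.
  have : \int[mu]_x ((cst +oo) \_ S) x <= \int[mu]_x qdens p psi N m y x.
    apply: ge0_le_integral_nm => x.
      by rewrite patchE; case: ifP => //= _; rewrite leey.
    rewrite patchE; case: ifP => [/set_mem|_].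
    - rewrite /S /b /qdens /= => /andP[/eqP -> pn0]; rewrite inve0.
      by rewrite mulr_infty gtr0_sg ?mul1e// lt_neqAle eq_sym pn0 p_ge0.
    - rewrite /qdens; apply: mule_ge0; first by rewrite lee_fin.
      by rewrite inve_ge0 lee_fin psi_ge0.
  rewrite q_prob// -integral_mkcond integral_cst//.
  by rewrite gt0_mulye ?lt0e ?muS ?measure_ge0// leye_eq.
have mky : measurable_fun setT (fun z => kk m y z).
  have := measurableT_comp (kk_meas m mN) (@pair1_measurable _ _ T T y).
  by move=> H; exact: H.
apply: ge0_ae_eq_integral => //.
- by apply: emeasurable_funM => //; exact/measurable_EFinP.
- by apply: emeasurable_funM => //; exact/measurable_EFinP.
- by move=> z _; apply: mule_ge0; rewrite ?lee_fin ?kk_ge0.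
- by move=> z _; apply: mule_ge0; rewrite ?lee_fin ?p_ge0.
exists S; split => // z /= /not_implyP[_]; apply: contra_notP => zS.
congr (_ * _); congr EFin; rewrite /kk.
case: (eqVneq (psi m y z) 0%R) => [pz|//].
move/negP: zS; rewrite /b pz eqxx /= negbK => /eqP ->.
by [].
Qed.

Lemma pstep_ge0 n k x y : 0 <= pstep mu p n k x y.
Proof.
elim: k x y => /= [|k IH] x y; first by rewrite lee_fin.
by apply: integral_ge0 => z _; apply: mule_ge0; rewrite ?lee_fin.
Qed.

Lemma pstep_meas n k :
  measurable_fun setT (fun xy : T * T => pstep mu p n k xy.1 xy.2).
Proof.
elim: k => /= [|k IH]; first exact/measurable_EFinP.
pose G := fun w : (T * T) * T =>
  pstep mu p n k w.1.1 w.2 * (p (n + k).+1 w.2 w.1.2)%:E.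
have mG : measurable_fun setT G.
  apply: emeasurable_funM.
  - have := measurableT_comp IH (measurable_fun_pair
      (measurableT_comp measurable_fst measurable_fst) measurable_snd).
    by move=> H; exact: H.
  - apply/measurable_EFinP.
    have := measurableT_comp (p_meas (n + k).+1) (measurable_fun_pair
      measurable_snd (measurableT_comp measurable_snd measurable_fst)).
    by move=> H; exact: H.
have G0 w : 0 <= G w by apply: mule_ge0; rewrite ?lee_fin ?pstep_ge0.
have := measurable_fun_fubini_tonelli_F (m2 := mu) G mG G0.
by move=> H; exact: H.
Qed.

Lemma main_ge0 (g : T -> R) n : measurable_fun setT g -> (forall x, 0 <= g x)%R ->
  forall k m, (n + k + m).+1 = N -> forall y,
  \int[mu]_x ((g x)%:E * pstep mu p n k x y) = W g k.+1 m y.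
Proof.
move=> mg g0; elim=> [|k IH] m hN y.
  rewrite /= kk_ae //; try lia; try exact/measurable_EFinP;
    try by move=> z; rewrite lee_fin.
  rewrite (_ : (N - m.+1)%N = n); last by lia.
  by apply: eq_integral => x _; rewrite muleC.
have mpk x : measurable_fun setT (fun z => pstep mu p n k x z).
  have := measurableT_comp (pstep_meas n k) (@pair1_measurable _ _ T T x).
  by move=> H; exact: H.
have mpy j : measurable_fun setT (fun z => p j z y).
  exact: (measurableT_comp (p_meas j) (pair2_measurable y)).
rewrite /=.
transitivity (\int[mu]_x \int[mu]_z ((g x)%:E *
    (pstep mu p n k x z * (p (n + k).+1 z y)%:E))).
  apply: eq_integral => x _; rewrite ge0_integralZl_EFin//.
  - by move=> z _; apply: mule_ge0; rewrite ?lee_fin ?pstep_ge0.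
  - by apply: emeasurable_funM => //; exact/measurable_EFinP.
pose f := fun xz : T * T => (g xz.1)%:E *
    (pstep mu p n k xz.1 xz.2 * (p (n + k).+1 xz.2 y)%:E).
have mf : measurable_fun setT f.
  apply: emeasurable_funM.
    apply/measurable_EFinP; have := measurableT_comp mg (@measurable_fst _ _ T T).
    by move=> H; exact: H.
  apply: emeasurable_funM; first exact: pstep_meas.
  apply/measurable_EFinP.
  have := measurableT_comp (mpy (n + k).+1) (@measurable_snd _ _ T T).
  by move=> H; exact: H.
have f0 w : 0 <= f w.
  by apply: mule_ge0; rewrite ?lee_fin//; apply: mule_ge0; rewrite ?lee_fin ?pstep_ge0.
have := fubini_tonelli (m1 := mu) (m2 := mu) f mf f0; rewrite /f /= => ->.
transitivity (\int[mu]_z ((p (n + k).+1 z y)%:E * W g k.+1 m.+1 z)).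
  apply: eq_integral => z _; rewrite -IH; last by lia.
  rewrite -ge0_integralZl_EFin//.
  - by apply: eq_integral => x _; rewrite muleA muleC.
  - by move=> x _; apply: mule_ge0; rewrite ?lee_fin ?pstep_ge0.
  - apply: emeasurable_funM; first exact/measurable_EFinP.
    have := measurableT_comp (pstep_meas n k) (pair2_measurable z).
    by move=> H; exact: H.
have mW := W_meas g mg (k.+1) (m.+1) ltac:(lia).
have W0 := W_ge0 g g0 k.+1 m.+1.
rewrite kk_ae //; try lia.
by rewrite (_ : (N - m.+1)%N = (n + k).+1); last by lia.
Qed.

Lemma W_abs (g : T -> R) : measurable_fun setT g ->
  forall j m z, (m + j <= N)%N ->
  W (fun x => `|g x|%R) j m z = W (funrpos g) j m z + W (funrneg g) j m z.
Proof.
move=> mg; elim=> /= [|j IH] m z h.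
  by rewrite -EFinD; congr EFin; have := congr1 (fun h => h z) (funrposDneg g).
have mp := measurable_funrpos mg; have mn := measurable_funrneg mg.
have mWp := W_meas _ mp j m.+1 ltac:(lia).
have mWn := W_meas _ mn j m.+1 ltac:(lia).
have W0p := W_ge0 (funrpos g) (funrpos_ge0 g) j m.+1.
have W0n := W_ge0 (funrneg g) (funrneg_ge0 g) j m.+1.
have mk : measurable_fun setT (fun z' => (kk m z z')%:E).
  apply/measurable_EFinP.
  have := measurableT_comp (kk_meas m ltac:(lia)) (@pair1_measurable _ _ T T z).
  by move=> H; exact: H.
rewrite -ge0_integralD //; first last.
- by apply: emeasurable_funM.
- by move=> x _; apply: mule_ge0; rewrite ?lee_fin ?kk_ge0.
- by apply: emeasurable_funM.
- by move=> x _; apply: mule_ge0; rewrite ?lee_fin ?kk_ge0.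
apply: eq_integral => z' _; rewrite IH; last by lia.
by rewrite muleDr // ge0_adde_def // inE.
Qed.

Lemma W_signed (g : T -> R) : measurable_fun setT g ->
  forall j m z, (m + j <= N)%N -> W (fun x => `|g x|%R) j m z < +oo ->
  W g j m z = W (funrpos g) j m z - W (funrneg g) j m z.
Proof.
move=> mg; elim=> /= [|j IH] m z h.
  by move=> _; rewrite -EFinB; congr EFin; have := congr1 (fun h => h z) (funrposBneg g).
move=> fin.
have mp := measurable_funrpos mg; have mn := measurable_funrneg mg.
have ma : measurable_fun setT (fun x => `|g x|%R).
  exact: (measurableT_comp (@normr_measurable R setT) mg).
have mWp := W_meas _ mp j m.+1 ltac:(lia).
have mWn := W_meas _ mn j m.+1 ltac:(lia).
have mWa := W_meas _ ma j m.+1 ltac:(lia).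
have mWg := W_meas _ mg j m.+1 ltac:(lia).
have W0p := W_ge0 (funrpos g) (funrpos_ge0 g) j m.+1.
have W0n := W_ge0 (funrneg g) (funrneg_ge0 g) j m.+1.
have W0a := W_ge0 (fun x => `|g x|%R) (fun x => normr_ge0 (g x)) j m.+1.
have mk : measurable_fun setT (fun z' => (kk m z z')%:E).
  apply/measurable_EFinP.
  have := measurableT_comp (kk_meas m ltac:(lia)) (@pair1_measurable _ _ T T z).
  by move=> H; exact: H.
have k0 z' : 0 <= (kk m z z')%:E by rewrite lee_fin kk_ge0.
pose Fa := fun z' => (kk m z z')%:E * W (fun x => `|g x|%R) j m.+1 z'.
have mFa : measurable_fun setT Fa by apply: emeasurable_funM.
pose A := Fa @^-1` [set +oo].
have mA : measurable A.
  by rewrite -[A]setTI; exact: (mFa measurableT [set +oo] (emeasurable_set1 _)).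
have A0 : mu A = 0.
  apply/eqP/negPn/negP => muA.
  have : \int[mu]_x ((cst +oo) \_ A) x <= \int[mu]_x Fa x.
    apply: ge0_le_integral_nm => x.
      by rewrite patchE; case: ifP => //= _; rewrite leey.
    rewrite patchE; case: ifP => [/set_mem|_]; first by rewrite /A /= => ->.
    exact: mule_ge0.
  rewrite -integral_mkcond integral_cst // gt0_mulye ?lt0e ?muA ?measure_ge0 //.
  by move=> /le_lt_trans/(_ fin); rewrite ltxx.
have intP (hh : T -> R) : (forall x, 0 <= hh x)%R -> measurable_fun setT hh ->
    (forall z', W hh j m.+1 z' <= W (fun x => `|g x|%R) j m.+1 z') ->
    mu.-integrable setT (fun z' => (kk m z z')%:E * W hh j m.+1 z').
  move=> h0 mh hle; apply/integrableP; split.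
    by apply: emeasurable_funM => //; apply: W_meas => //; lia.
  apply: le_lt_trans fin; apply: ge0_le_integral_nm => x //.
  rewrite gee0_abs; last by apply: mule_ge0 => //; exact: W_ge0.
  exact: lee_wpmul2l.
have ip : mu.-integrable setT (fun z' => (kk m z z')%:E * W (funrpos g) j m.+1 z').
  apply: (intP _ (funrpos_ge0 g) mp).
  by move=> z'; rewrite W_abs//; [exact: leeDl|lia].
have iN : mu.-integrable setT (fun z' => (kk m z z')%:E * W (funrneg g) j m.+1 z').
  apply: (intP _ (funrneg_ge0 g) mn).
  by move=> z'; rewrite W_abs//; [exact: leeDr|lia].
rewrite -(integralB _ ip iN) //.
apply: ae_eq_integral => //.
- by apply: emeasurable_funM.
- by apply: emeasurable_funB; apply: emeasurable_funM.
exists A; split => // z' /= /not_implyP[_]; apply: contra_notP => nA.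
have [kz|kz] := eqVneq (kk m z z') 0%R.
  by rewrite kz !mul0e sube0.
have kp : (0 < (kk m z z')%:E) by rewrite lte_fin lt_neqAle eq_sym kz kk_ge0.
have Wfin : W (fun x => `|g x|%R) j m.+1 z' < +oo.
  rewrite ltey; apply/negP => /eqP Wy; apply: nA; rewrite /A /Fa /=.
  by rewrite Wy gt0_muley.
rewrite IH //; last by lia.
rewrite muleBr //; apply: fin_num_adde_defl; rewrite fin_numN ge0_fin_numE //.
apply: le_lt_trans Wfin; rewrite W_abs //; last by lia.
exact: leeDr.
Qed.

Lemma main_gen (g : T -> R) n y : measurable_fun setT g -> (n <= N)%N ->
  wexp mu (qdens p psi N) psi (fun z => `|g z|%R) (N - n) 0 y < +oo ->
  transition_integral mu p g n N y = wexp mu (qdens p psi N) psi g (N - n) 0 y.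
Proof.
move=> mg hn fin; rewrite /transition_integral.
case: eqP => [->|nN]; first by rewrite subnn.
rewrite !wexp_W in fin *; try lia.
rewrite (W_signed g mg) //; try lia.
rewrite /ptrans.
have hk : (N - n)%N = ((N - n).-1).+1 by lia.
rewrite hk.
rewrite -(main_ge0 (funrpos g) n (measurable_funrpos mg) (funrpos_ge0 g) ((N - n).-1) 0); last by lia.
rewrite -(main_ge0 (funrneg g) n (measurable_funrneg mg) (funrneg_ge0 g) ((N - n).-1) 0); last by lia.
rewrite integralE; congr (_ - _); apply: eq_integral => x _;
  rewrite ?funeposE ?funenegE /funrpos /funrneg;
  have P0 := pstep_ge0 n (N - n).-1 x y;
  have [gx0|gx0] := leP 0%R (g x).
- by rewrite max_l ?max_l // mule_ge0.
- rewrite max_r; last by apply: mule_le0_ge0 => //; rewrite lee_fin ltW.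
  by rewrite mul0e.
- rewrite max_r; last by rewrite oppe_le0 mule_ge0.
  by rewrite max_r ?mul0e // oppr_le0.
- rewrite max_l; last by rewrite oppe_ge0 mule_le0_ge0 // lee_fin ltW.
  by rewrite max_l ?EFinN ?mulNe // oppr_ge0 ltW.
Qed.

End gen.

Section musf.
Context {dsp : measure_display} {T : measurableType dsp} {R : realType}.
Variable (mu : {measure set T -> \bar R}) (sf : sigma_finite setT mu).
Definition musf : set T -> \bar R := let _ := sf in mu.
HB.instance Definition _ := Measure.copy musf mu.
HB.instance Definition _ := @Measure_isSigmaFinite.Build _ _ _ musf sf.
End musf.


Theorem theorem2 (R : realType) (d : nat)
  (mu : {measure set (d.-tuple R) -> \bar R})
  (mu_leb : is_lebesgue_Rd mu)
  (p : nat -> d.-tuple R -> d.-tuple R -> R)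
  (p_ge0 : forall j x y, (0 <= p j x y)%R)
  (p_meas : forall j,
     measurable_fun setT (fun xy : d.-tuple R * d.-tuple R => p j xy.1 xy.2))
  (p_prob : forall j x, \int[mu]_y (p j x y)%:E = 1)
  (N : nat) (psi : nat -> d.-tuple R -> d.-tuple R -> R)
  (psi_ge0 : forall m y x, (m < N)%N -> (0 <= psi m y x)%R)
  (psi_meas : forall m, (m < N)%N ->
     measurable_fun setT (fun yx : d.-tuple R * d.-tuple R => psi m yx.1 yx.2))
  (q_prob : forall m y, (m < N)%N -> \int[mu]_x qdens p psi N m y x = 1)
  (n : nat) (hn : (n <= N)%N)
  (g : d.-tuple R -> R) (g_meas : measurable_fun setT g)
  (y : d.-tuple R)
  (lhs_int : (n < N)%N ->
     mu.-integrable setT (fun x => (g x)%:E * ptrans mu p n N x y))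
  (rhs_fin : weighted_expectation mu p psi (fun z => `|g z|%R) N (N - n) y < +oo) :
  transition_integral mu p g n N y = weighted_expectation mu p psi g N (N - n) y.
Proof.
have sf := leb_sigma_finite d mu mu_leb.
have := @main_gen _ _ _ (musf mu sf) p psi N p_ge0 p_meas psi_ge0 psi_meas q_prob g n y g_meas hn rhs_fin.
by [].
Qed.
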